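(* Let $Q$ be a non-empty finite set of primes, $d\ge1$ an integer, $\ell$ a positive odd integer, and $m:\mathbb Z_{>0}\to\mathbb R_{>0}$ a multiplicative function with $m(q)\le q-1$ and $m(q)\le d$ for all $q\in Q$. Let $Q(\ell)=\{r\in\mathcal D(\prod_{q\in Q}q):\omega(r)\le\ell\}$ and $W_m(Q)=\prod_{q\in Q}(1-\frac{m(q)}{q})$. Then $$\sum_{r\in Q(\ell)}\frac{\mu(r)\,m(r)}{r}\;\ge\;W_m(Q)\Big(1-\Big(\frac{e\,\alpha}{\ell}\Big)^{\ell}\alpha\, e^{\alpha}\Big),\qquad\text{where }\alpha=(d+1)^2(2+\ln\ln(|Q|+1)).$$
   Context: $\mathcal D(n)$ is the set of positive divisors of $n$; $\omega(r)$ is the number of distinct prime divisors of $r$; $\mu$ is the Möbius function (for square-free $r$, $\mu(r)=(-1)^{\omega(r)}$). A function $m$ is multiplicative if $m(ab)=m(a)m(b)$ for all coprime positive integers $a,b$. $e$ is Euler's number. *)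

(* Defs.v *)
From HB Require Import structures.
From mathcomp Require Import all_boot all_order all_algebra.
From mathcomp Require Import all_classical all_reals all_analysis.
Set Implicit Arguments. Unset Strict Implicit. Unset Printing Implicit Defensive.
Import Order.TTheory GRing.Theory Num.Theory.
Local Open Scope ring_scope.

Definition omega (n : nat) : nat := size (primes n).

Definition mobius (n : nat) : int :=
  if all (fun p => logn p n == 1%N) (primes n) then (-1) ^+ omega n else 0%R.

Definition multiplicative_fn {R : ringType} (m : nat -> R) : Prop :=
  forall a b : nat, (0 < a)%N -> (0 < b)%N -> coprime a b -> m (a * b)%N = m a * m b.

(* Main.v *)
Require Import Defs.
From HB Require Import structures.
From mathcomp Require Import all_boot all_order all_algebra.
From mathcomp Require Import all_classical all_reals all_analysis.
From mathcomp Require Import ring lra zify.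
Import Order.TTheory GRing.Theory Num.Theory.
Local Open Scope ring_scope.
Set Implicit Arguments. Unset Strict Implicit.

Local Open Scope ring_scope.
Local Close Scope ring_scope.

Lemma primes_mulq q r : prime q -> (0 < r)%N -> ~~ (q %| r) ->
  perm_eq (primes (q * r)) (q :: primes r).
Proof.
move=> pq r0 nqr; apply: uniq_perm; first exact: primes_uniq.
  by rewrite /= primes_uniq andbT mem_primes negb_and negb_and nqr !orbT.
move=> p; rewrite primesM ?(prime_gt0 pq) // primes_prime // in_cons inE.
by rewrite orbF in_cons.
Qed.

Lemma omega_mulq q r : prime q -> (0 < r)%N -> ~~ (q %| r) ->
  omega (q * r) = (omega r).+1.
Proof. by move=> pq r0 nqr; rewrite /omega (perm_size (primes_mulq pq r0 nqr)). Qed.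

Lemma mobius_mulq q r : prime q -> (0 < r)%N -> ~~ (q %| r) ->
  mobius (q * r) = (- mobius r)%R.
Proof.
move=> pq r0 nqr; rewrite /mobius (omega_mulq pq r0 nqr).
rewrite (perm_all _ (primes_mulq pq r0 nqr)) /=.
have -> : logn q (q * r) = 1%N.
  rewrite lognM ?(prime_gt0 pq) // logn_prime // eqxx /=.
  by rewrite logn_coprime // prime_coprime.
rewrite eqxx /=.
have -> : all (fun p => logn p (q * r) == 1%N) (primes r) =
          all (fun p => logn p r == 1%N) (primes r).
  apply: eq_in_all => p; rewrite mem_primes => /andP[pp /andP[_ pr]].
  rewrite lognM ?(prime_gt0 pq) // logn_prime //.
  case: (eqVneq p q) => [epq | ne]; last by [].
  by rewrite -epq pr in nqr.
by case: all; rewrite ?oppr0 // exprS mulN1r.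
Qed.

Lemma divisors_mulq q N : prime q -> (0 < N)%N -> ~~ (q %| N) ->
  perm_eq (divisors (q * N)) (divisors N ++ map (muln q) (divisors N)).
Proof.
move=> pq N0 nqN; have q0 := prime_gt0 pq.
apply: uniq_perm; first exact: divisors_uniq.
  rewrite cat_uniq divisors_uniq map_inj_uniq ?divisors_uniq; last first.
    by move=> a b /eqP; rewrite eqn_pmul2l // => /eqP.
  rewrite andbT /=; apply/hasPn => d /mapP[e _ ->].
  rewrite -dvdn_divisors //; apply: contra nqN => h.
  by apply: dvdn_trans h; apply: dvdn_mulr.
move=> d; rewrite mem_cat -!dvdn_divisors ?muln_gt0 ?q0 //.
apply/idP/orP.
  move=> dqN; have [qd|nqd] := boolP (q %| d).
    right; apply/mapP; exists (d %/ q); last by rewrite mulnC divnK.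
    by rewrite -dvdn_divisors // -(dvdn_pmul2l q0) mulnC divnK.
  left; rewrite -(@Gauss_dvdr _ q) //; last by rewrite coprime_sym prime_coprime.
case=> [dN | /mapP[e]]; first by apply: dvdn_trans dN _; apply: dvdn_mull.
by rewrite -dvdn_divisors // => eN ->; rewrite dvdn_pmul2l.
Qed.

Local Open Scope ring_scope.
Lemma m1 (R : realType) (m : nat -> R) : (forall n, (0 < n)%N -> 0 < m n) ->
  multiplicative_fn m -> m 1%N = 1.
Proof.
move=> mpos mm; have h := mm 1%N 1%N isT isT (coprime1n 1).
have p := mpos 1%N isT.
have : m 1%N * (m 1%N - 1) = 0 by rewrite mulrBr mulr1 -h muln1 subrr.
by move/eqP; rewrite mulf_eq0 subr_eq0 gt_eqF //= => /eqP.
Qed.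

Fixpoint Tsum {R : ringType} (xs : seq R) (l : nat) : R :=
  match xs with
  | [::] => 1
  | x :: xs' => match l with 0 => Tsum xs' 0 | l'.+1 => Tsum xs' l'.+1 - x * Tsum xs' l' end
  end.

Lemma partA (R : realType) (m : nat -> R) (Q : seq nat) l :
  uniq Q -> all prime Q -> m 1%N = 1 -> multiplicative_fn m ->
  \sum_(r <- divisors (\prod_(q <- Q) q)%N | (omega r <= l)%N)
      (mobius r)%:~R * m r / r%:R = Tsum [seq m q / q%:R | q <- Q] l.
Proof.
move=> + + m1 mm; elim: Q l => [|q Q IH] l.
  move=> _ _; rewrite big_nil /= (_ : divisors 1 = [:: 1%N]) //.
  rewrite big_cons big_nil addr0 /=. by rewrite m1 divr1 mulr1.
rewrite /= => /andP[qQ uQ] /andP[pq pQ].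
have N0 : (0 < \prod_(p <- Q) p)%N.
  rewrite big_seq; apply: prodn_cond_gt0 => p pin; apply: prime_gt0.
  exact: (allP pQ).
have nqN : ~~ (q %| \prod_(p <- Q) p)%N.
  rewrite Euclid_dvd_prod // big_has; apply/hasPn => p pin /=.
  rewrite dvdn_prime2 //; last exact: (allP pQ).
  by apply: contraNneq qQ => ->.
rewrite big_cons (perm_big _ (divisors_mulq pq N0 nqN)) big_cat /= big_map IH //.
have key : forall r, r \in divisors (\prod_(p <- Q) p) ->
    (mobius (q * r)%N)%:~R * m (q * r)%N / (q * r)%N%:R =
    - (m q / q%:R) * ((mobius r)%:~R * m r / r%:R).
  move=> r; rewrite -dvdn_divisors // => rN.
  have r0 : (0 < r)%N by apply: dvdn_gt0 rN.
  have nqr : ~~ (q %| r)%N by apply: contra nqN => h; apply: dvdn_trans h rN.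
  rewrite mobius_mulq // (mm q r (prime_gt0 pq) r0); last by rewrite prime_coprime.
  rewrite natrM rmorphN /=.
  have qn0 : (q%:R : R) != 0 by rewrite pnatr_eq0 -lt0n prime_gt0.
  have rn0 : (r%:R : R) != 0 by rewrite pnatr_eq0 -lt0n.
  by field; rewrite rn0 qn0.
have rin_dvd : forall r, r \in divisors (\prod_(p <- Q) p) ->
    [/\ (0 < r)%N & ~~ (q %| r)%N].
  move=> r; rewrite -dvdn_divisors // => rN; split; first exact: dvdn_gt0 rN.
  by apply: contra nqN => h; apply: dvdn_trans h rN.
case: l => [|l].
  rewrite big_seq_cond big1 ?addr0 // => r /andP[rin].
  by have [r0 nqr] := rin_dvd r rin; rewrite omega_mulq.
rewrite big_seq_cond (eq_bigr (fun r => - (m q / q%:R) * ((mobius r)%:~R * m r / r%:R))); last first.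
  by move=> r /andP[rin _]; rewrite key.
rewrite (eq_bigl (fun r => (r \in divisors (\prod_(p <- Q) p)) && (omega r <= l)%N)); last first.
  move=> r /=; case rin: (r \in _) => //=.
  by have [r0 nqr] := rin_dvd r rin; rewrite omega_mulq.
by rewrite -big_seq_cond -mulr_sumr IH // mulNr.
Qed.

Local Open Scope ring_scope.

Lemma bern (R : realType) (z x : R) n : 0 <= z -> 0 <= x ->
  z ^+ n.+1 + n.+1%:R * x * z ^+ n <= (z + x) ^+ n.+1.
Proof.
move=> z0 x0; elim: n => [|n IH]; first by rewrite !expr1 expr0 mulr1 mul1r.
rewrite [(z + x) ^+ _]exprS.
apply: le_trans (ler_wpM2l (addr_ge0 z0 x0) IH).
have a0 : 0 <= z ^+ n by rewrite exprn_ge0.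
rewrite !exprS -!natr1. set a := z ^+ n. set N := n%:R.
have N0 : 0 <= N by rewrite ler0n.
have h : 0 <= (N + 1) * (x * x * a) by rewrite mulr_ge0 ?mulr_ge0 ?addr_ge0.
nra.
Qed.

Lemma prod_01 (R : realType) (xs : seq R) : all (fun x => 0 <= x <= 1) xs ->
  0 <= \prod_(x <- xs) (1 - x) <= 1.
Proof.
elim: xs => [|x xs IH]; first by rewrite big_nil ler01 lexx.
rewrite /= big_cons => /andP[/andP[x0 x1] /IH /andP[p0 p1]].
apply/andP; split; first by rewrite mulr_ge0 // subr_ge0.
by rewrite mulr_ile1 // ?subr_ge0 // lerBlDr lerDl.
Qed.

Lemma partB (R : realType) (xs : seq R) l : all (fun x => 0 <= x <= 1) xs ->
  `|\prod_(x <- xs) (1 - x) - Tsum xs l| <= (\sum_(x <- xs) x) ^+ l.+1 / l.+1`!%:R.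
Proof.
elim: xs l => [|x xs IH] l.
  by move=> _; rewrite big_nil /= subrr normr0 big_nil expr0n /= mul0r.
rewrite /= big_cons big_cons => /andP[/andP[x0 x1] Hxs].
have /andP[p0 p1] := @prod_01 R xs Hxs.
have z0 : 0 <= \sum_(y <- xs) y.
  rewrite big_seq; apply: sumr_ge0 => y yin.
  by have /allP/(_ y yin)/andP[] := Hxs.
set Z := \sum_(y <- xs) y in z0 IH *.
set W := \prod_(y <- xs) (1 - y) in p0 p1 IH *.
case: l => [|l].
  have := IH 0%N Hxs; rewrite !expr1 !divr1.
  move=> h; rewrite (_ : (1 - x) * W - Tsum xs 0 = (W - Tsum xs 0) - x * W); last by ring.
  apply: le_trans (ler_normB _ _) _.
  rewrite normrM (ger0_norm x0) (ger0_norm p0).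
  have : x * W <= x by nra.
  rewrite addrC; lra.
have h1 := IH l.+1 Hxs; have h2 := IH l Hxs.
rewrite (_ : (1 - x) * W - (Tsum xs l.+1 - x * Tsum xs l) =
   (W - Tsum xs l.+1) - x * (W - Tsum xs l)); last by ring.
apply: le_trans (ler_normB _ _) _.
rewrite normrM (ger0_norm x0).
have hb := @bern R _ _ l.+1 z0 x0.
have f0 : (0 : R) < l.+1`!%:R by rewrite ltr0n fact_gt0.
have f1 : (0 : R) < l.+2`!%:R by rewrite ltr0n fact_gt0.
have ef : l.+2`!%:R = l.+2%:R * l.+1`!%:R :> R by rewrite factS natrM.
apply: le_trans (lerD h1 (ler_wpM2l x0 h2)) _.
rewrite ef.
have N0 : (0 : R) < l.+2%:R by rewrite ltr0n.
have -> : x * (Z ^+ l.+1 / l.+1`!%:R) = (l.+2%:R * x * Z ^+ l.+1) / (l.+2%:R * l.+1`!%:R).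
  by field; rewrite ?gt_eqF.
rewrite -mulrDl; apply: ler_wpM2r; first by rewrite invr_ge0 ltW // mulr_gt0.
by rewrite [x + Z]addrC.
Qed.

Local Open Scope ring_scope.
Local Close Scope ring_scope.

Lemma bin_le_exp n m : 'C(n, m) <= 2 ^ n.
Proof.
elim: n m => [|n IH] [|m] //=; first by rewrite expn_gt0.
by rewrite binS expnS mul2n -addnn leq_add.
Qed.

Lemma prime_ndvd_fact p n : prime p -> n < p -> ~~ (p %| n`!).
Proof.
move=> pp np; rewrite fact_prod Euclid_dvd_prod // big_has; apply/hasPn => i.
rewrite mem_index_iota => /andP[i1 iN] /=; apply/negP => /dvdn_leq.
have i0 : 0 < i by []. move=> /(_ i0) pi; lia.
Qed.

Lemma prime_dvd_bin p n : prime p -> n < p <= n.*2 -> p %| 'C(n.*2, n).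
Proof.
move=> pp /andP[np pn2].
have le : n <= n.*2 by rewrite -addnn leq_addr.
have h := bin_fact le.
have e : n.*2 - n = n by rewrite -addnn addnK.
rewrite e in h.
have : p %| 'C(n.*2, n) * (n`! * n`!) by rewrite h dvdn_fact // prime_gt0.
by rewrite Euclid_dvdM // Euclid_dvdM // orbb (negPf (prime_ndvd_fact pp np)) orbF.
Qed.

Lemma prod_primes_dvd (s : seq nat) M : uniq s -> all prime s ->
  all (fun p => p %| M) s -> \prod_(p <- s) p %| M.
Proof.
elim: s => [|p s IH]; first by rewrite big_nil dvd1n.
rewrite /= => /andP[ps us] /andP[pp ps'] /andP[pM sM]; rewrite big_cons.
rewrite Gauss_dvd ?pM ?IH //.
rewrite prime_coprime // Euclid_dvd_prod // big_has; apply/hasPn => q qs /=.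
rewrite dvdn_prime2 //; last exact: (allP ps').
by apply: contraNneq ps => ->.
Qed.

Lemma pow_le_prod (s : seq nat) n : all (fun p => n <= p) s -> n ^ size s <= \prod_(p <- s) p.
Proof.
elim: s => [|p s IH]; first by rewrite big_nil.
by rewrite /= big_cons expnS => /andP[np /IH h]; rewrite leq_mul.
Qed.

Definition blk j := [seq p <- index_iota (2 ^ j).+1 (2 ^ j.+1).+1 | prime p].

Lemma blk_count j : j * size (blk j) <= 2 ^ j.+1.
Proof.
set n := 2 ^ j.
have n2 : n.*2 = 2 ^ j.+1 by rewrite expnS mul2n.
have h1 : n ^ size (blk j) <= \prod_(p <- blk j) p.
  apply: pow_le_prod; apply/allP => p; rewrite mem_filter mem_index_iota.
  by case/andP => _ /andP[h _]; apply: ltnW.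
have h2 : \prod_(p <- blk j) p <= 'C(n.*2, n).
  apply: dvdn_leq; first by rewrite bin_gt0 -addnn leq_addr.
  apply: prod_primes_dvd.
  - by rewrite filter_uniq // iota_uniq.
  - by apply/allP => p; rewrite mem_filter => /andP[].
  - apply/allP => p; rewrite mem_filter mem_index_iota => /andP[pp /andP[a b]].
    by apply: prime_dvd_bin => //; rewrite a n2 -ltnS.
have h3 := bin_le_exp n.*2 n.
have : 2 ^ (j * size (blk j)) <= 2 ^ (2 ^ j.+1).
  rewrite expnM -/n (leq_trans h1) // (leq_trans h2) //.
  by rewrite (leq_trans h3) // n2.
by rewrite leq_exp2l.
Qed.
Local Open Scope ring_scope.

Definition Pn (R : realType) (N : nat) : R := \sum_(0 <= i < N.+1 | prime i) (i%:R)^-1.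

Lemma Pn_mono (R : realType) a b : (a <= b)%N -> Pn R a <= Pn R b.
Proof.
move=> ab; rewrite /Pn [X in _ <= X](big_cat_nat (n := a.+1)) //= ?ltnS //.
rewrite lerDl; apply: sumr_ge0 => i _; by rewrite invr_ge0 ler0n.
Qed.

Lemma sum_const_seq (R : realType) (s : seq nat) (c : R) :
  \sum_(i <- s) c = (size s)%:R * c.
Proof.
elim: s => [|a s IH]; first by rewrite big_nil mul0r.
by rewrite big_cons IH /= -natr1 mulrDl mul1r addrC.
Qed.

Lemma Pn_step (R : realType) j : (0 < j)%N ->
  Pn R (2 ^ j.+1) <= Pn R (2 ^ j) + 2 / j%:R.
Proof.
move=> j0; rewrite /Pn [X in X <= _](big_cat_nat (n := (2 ^ j).+1)) //=; last first.
  by rewrite ltnS leq_exp2l.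
rewrite lerD2l -big_filter -/(blk j).
have pj : (0 : R) < (2 ^ j)%:R by rewrite ltr0n expn_gt0.
apply: (@le_trans _ _ (\sum_(i <- blk j) ((2 ^ j)%:R)^-1)).
  rewrite big_seq [X in _ <= X]big_seq; apply: ler_sum => i.
  rewrite mem_filter mem_index_iota => /andP[_ /andP[hi _]].
  have i0 : (0 < i)%N by apply: leq_ltn_trans _ hi.
  by rewrite lef_pV2 ?posrE ?ltr0n ?expn_gt0 // ler_nat ltnW.
rewrite sum_const_seq.
have hc := blk_count j.
rewrite ler_pdivlMr ?ltr0n // mulrAC ler_pdivrMr // -natrM -natrM ler_nat.
by rewrite mulnC -expnS.
Qed.

Lemma Pn_bound (R : realType) J :
  Pn R (2 ^ J) <= Pn R 32 + 2 * \sum_(5 <= j < J) (j%:R)^-1.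
Proof.
elim: J => [|J IH].
  rewrite big_geq // mulr0 addr0; apply: Pn_mono; by [].
have [J5|J5] := leqP J 4.
  rewrite big_geq ?ltnS // mulr0 addr0; apply: Pn_mono.
  by rewrite (leq_trans (leq_pexp2l _ (_ : J.+1 <= 5)%N)).
rewrite big_nat_recr //= mulrDr addrA.
apply: le_trans (Pn_step R (ltn_trans _ J5)) _ => //.
by rewrite lerD2r.
Qed.

Lemma Pn32 (R : realType) : Pn R 32 <= 7 / 4.
Proof.
rewrite /Pn -big_filter.
have -> : [seq i <- index_iota 0 33 | prime i] = [:: 2; 3; 5; 7; 11; 13; 17; 19; 23; 29; 31]%N by [].
rewrite !big_cons big_nil.
lra.
Qed.

Lemma ln_ge1B (R : realType) (x : R) : 0 < x -> 1 - x^-1 <= ln x.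
Proof.
move=> x0.
have h := @le_ln1Dx R (x^-1 - 1).
have e : 1 + (x^-1 - 1) = x^-1 by ring.
rewrite e lnV ?posrE // in h.
have : -1 < x^-1 - 1 by have := invr_gt0 x; rewrite x0; lra.
move/h; lra.
Qed.

Lemma inv_le_lnB (R : realType) j : (1 < j)%N ->
  (j%:R)^-1 <= ln (j%:R : R) - ln (j.-1%:R).
Proof.
move=> j1; have j0 : (0 < j.-1)%N by rewrite -ltnS prednK // ltnW.
rewrite -ln_div ?posrE ?ltr0n //; last by apply: ltnW.
have hp : (0 : R) < j%:R / j.-1%:R by rewrite divr_gt0 ?ltr0n // ltnW.
apply: le_trans (ln_ge1B hp).
have jn : (j%:R : R) = j.-1%:R + 1 by rewrite natr1 prednK // ltnW.
have a0 : (0 : R) < j.-1%:R by rewrite ltr0n.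
rewrite jn; set a := (j.-1%:R : R) in a0 *.
have -> : 1 - ((a + 1) / a)^-1 = (a + 1)^-1.
  have n1 : (j.-1%:R + 1 : R) != 0 by rewrite gt_eqF // addr_gt0.
  by field; rewrite n1 gt_eqF.
by [].
Qed.

Lemma sum_inv_ln (R : realType) a b : (1 < a)%N -> (a <= b)%N ->
  \sum_(a <= j < b) (j%:R : R)^-1 <= ln (b.-1%:R : R) - ln (a.-1%:R).
Proof.
move=> a1; elim: b => [|b IH]; first by rewrite leqn0 => /eqP a0; rewrite a0 in a1.
rewrite leq_eqVlt => /orP[/eqP <-|]; first by rewrite big_geq // subrr.
rewrite ltnS => ab; rewrite big_nat_recr //=.
have := inv_le_lnB R (leq_trans a1 ab).
have := IH ab; lra.
Qed.

Lemma ln2_ge (R : realType) : 5 / 8 <= ln (2 : R).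
Proof.
have h := sum_inv_ln R (isT : (1 < 5)%N) (isT : (5 <= 9)%N).
have e : ln (8%:R : R) = ln 2 + ln 4.
  by rewrite -lnM ?posrE // -natrM.
rewrite /= e in h.
move: h; rewrite big_ltn // big_ltn // big_ltn // big_ltn // big_geq // => h.
lra.
Qed.

Lemma ln3_ge (R : realType) : 1 <= ln (3 : R).
Proof.
have h := sum_inv_ln R (isT : (1 < 9)%N) (isT : (9 <= 13)%N).
have e1 : ln (12%:R : R) = ln 3 + ln 4.
  by rewrite -lnM ?posrE // -natrM.
have e2 : ln (8%:R : R) = ln 2 + ln 4.
  by rewrite -lnM ?posrE // -natrM.
rewrite /= e1 e2 in h.
move: h; rewrite big_ltn // big_ltn // big_ltn // big_ltn // big_geq // => h.
have := ln2_ge R.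
lra.
Qed.

Lemma sub_sum_le (R : realType) (s t : seq nat) (f : nat -> R) :
  uniq s -> {subset s <= t} -> uniq t -> (forall i, i \in t -> 0 <= f i) ->
  \sum_(i <- s) f i <= \sum_(i <- t) f i.
Proof.
move=> us st ut f0.
rewrite [X in _ <= X](bigID (fun i => i \in s)) /=.
have -> : \sum_(i <- t | i \in s) f i = \sum_(i <- s) f i.
  rewrite -big_filter; apply: perm_big; apply: uniq_perm => //.
    exact: filter_uniq.
  move=> i; rewrite mem_filter; apply/andP/idP => [[] //|iS].
  by split => //; apply: st iS.
rewrite lerDl big_seq_cond; apply: sumr_ge0 => i /andP[it _]; exact: f0.
Qed.

Local Open Scope ring_scope.

Lemma H_bound (R : realType) (Q : seq nat) : uniq Q -> all prime Q -> (2 <= size Q)%N ->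
  \sum_(q <- Q) (q%:R : R)^-1 <= 2 + 2 * ln (ln ((size Q).+1%:R)).
Proof.
move=> uQ pQ k2; set k := size Q in k2 *.
set b := (trunc_log 2 k.+1).+1.
have hb1 : (2 ^ b.-1 <= k.+1)%N by apply: trunc_logP.
have hb2 : (k.+1 < 2 ^ b)%N by apply: trunc_log_ltn.
set T := (2 ^ (b + b))%N.
have T4 : (4 * k <= T)%N.
  rewrite /T expnD; move: hb2; set B := (2 ^ b)%N => hb2; nia.
have T0 : (0 < T)%N by rewrite expn_gt0.
rewrite (bigID (fun q => q <= T)%N) /=.
have h1 : \sum_(q <- Q | (q <= T)%N) (q%:R : R)^-1 <= Pn R T.
  rewrite -big_filter /Pn [X in _ <= X]big_mkcond -[X in _ <= X]big_mkcond -[X in _ <= X]big_filter; apply: sub_sum_le.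
  - exact: filter_uniq.
  - move=> q; rewrite !mem_filter mem_index_iota ltnS => /andP[qT qQ].
    by rewrite qT (allP pQ q qQ).
  - by rewrite filter_uniq // iota_uniq.
  - by move=> i _; rewrite invr_ge0 ler0n.
have h2 : \sum_(q <- Q | ~~ (q <= T)%N) (q%:R : R)^-1 <= 1 / 4.
  apply: (@le_trans _ _ (\sum_(q <- Q) (T%:R : R)^-1)).
    rewrite [X in _ <= X](bigID (fun q => q <= T)%N) /= ler_wpDl //.
      by apply: sumr_ge0 => i _; rewrite invr_ge0 ler0n.
    apply: ler_sum => q; rewrite -ltnNge => Tq.
    by rewrite lef_pV2 ?posrE ?ltr0n ?(ltn_trans T0 Tq) // ler_nat ltnW.
  rewrite sum_const_seq -/k ler_pdivrMr ?ltr0n //.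
  have : ((4 * k)%N%:R : R) <= T%:R by rewrite ler_nat.
  rewrite natrM; lra.
have h3 : Pn R T <= 7 / 4 + 2 * \sum_(5 <= j < b + b) (j%:R : R)^-1.
  apply: le_trans (Pn_bound R (b + b)) _; rewrite lerD2r; exact: Pn32.
have k3 : ((3 : R) <= k.+1%:R) by rewrite ler_nat ltnS.
have lk1 : 1 <= ln (k.+1%:R : R).
  apply: le_trans (ln3_ge R) _; rewrite ler_ln ?posrE // ?ltr0n //.
have h4 : \sum_(5 <= j < b + b) (j%:R : R)^-1 <= ln (ln (k.+1%:R)).
  have [b3|b3] := leqP 3 b; last first.
    rewrite big_geq; last by lia.
    by apply: ln_ge0.
  apply: le_trans (sum_inv_ln R (isT : (1 < 5)%N) (_ : (5 <= b + b)%N)) _; first by lia.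
  have l2 := ln2_ge R.
  have lk : (b.-1)%:R * ln 2 <= ln (k.+1%:R : R).
    rewrite mulrC mulr_natr -lnXn // -natrX.
    by rewrite ler_ln ?posrE ?ltr0n ?expn_gt0 // ler_nat.
  have e : ln (((b + b).-1)%:R : R) - ln (5.-1%:R) = ln (((b + b).-1)%:R / 4).
    by rewrite ln_div ?posrE ?ltr0n //; lia.
  rewrite e ler_ln ?posrE ?divr_gt0 ?ltr0n //; last 2 first.
  - lia.
  - lra.
  have hb : (((b + b).-1)%:R : R) = 2 * b%:R - 1.
    have : ((b + b)%N%:R : R) = ((b + b).-1)%:R + 1.
      by rewrite natr1 prednK //; lia.
    rewrite natrD; lra.
  have hb' : ((b.-1)%:R : R) = b%:R - 1.
    have : (b%:R : R) = (b.-1)%:R + 1.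
      by rewrite natr1 prednK //; lia.
    lra.
  have b3' : (3 : R) <= b%:R by rewrite ler_nat.
  rewrite hb; rewrite hb' in lk.
  nra.
lra.
Qed.

Local Open Scope ring_scope.

Lemma tri_sum n : (\sum_(0 <= i < n.+1) i <= n * n)%N.
Proof.
elim: n => [|n IH]; first by rewrite big_nat1.
rewrite big_nat_recr //=; lia.
Qed.

Lemma y_eq (R : realType) (mq q : R) : 0 < q -> mq < q ->
  (mq / q) / (1 - mq / q) = mq / (q - mq).
Proof. by move=> q0 mq0; field; rewrite ?gt_eqF // ?subr_gt0. Qed.

Lemma y_small (R : realType) (mq q : R) : 0 < mq -> 1 <= q -> mq <= q - 1 ->
  (mq / q) / (1 - mq / q) <= q.
Proof.
move=> m0 q1 mq1; rewrite y_eq; [|lra|lra].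
rewrite ler_pdivrMr; last lra.
nra.
Qed.

Lemma y_big (R : realType) (mq q d : R) : 0 < mq -> 0 <= d -> d + 2 <= q -> mq <= d ->
  (mq / q) / (1 - mq / q) <= (d + 1) ^+ 2 / 2 * q^-1.
Proof.
move=> m0 d0 dq md; rewrite y_eq; [|lra|lra].
have q0 : 0 < q by lra.
rewrite (_ : (d + 1) ^+ 2 / 2 * q^-1 = (d + 1) ^+ 2 / (2 * q)); last first.
  by field; rewrite gt_eqF.
rewrite ler_pdivrMr; last lra.
rewrite mulrAC ler_pdivlMr; last lra.
have h1 : 0 <= (q - d - 2) * (d ^+ 2 + 1) by apply: mulr_ge0; [lra | rewrite addr_ge0 ?sqr_ge0].
have h2 : 0 <= (d - mq) * (2 * q + (d + 1) ^+ 2) by apply: mulr_ge0; [lra | rewrite addr_ge0 ?sqr_ge0 //; lra].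
rewrite !expr2 in h1 h2 *.
nra.
Qed.


Lemma Y_bound (R : realType) (Q : seq nat) (d : nat) (m : nat -> R) :
  uniq Q -> all prime Q -> (2 <= size Q)%N ->
  (forall q, q \in Q -> 0 < m q) -> (forall q, q \in Q -> m q <= q%:R - 1) ->
  (forall q, q \in Q -> m q <= d%:R) ->
  \sum_(q <- Q) (m q / q%:R) / (1 - m q / q%:R)
    <= (d.+1%:R) ^+ 2 * (2 + ln (ln ((size Q).+1%:R))).
Proof.
move=> uQ pQ k2 m0 mq md.
have HB := H_bound R uQ pQ k2.
set L := ln (ln ((size Q).+1%:R)) in HB *.
rewrite (bigID (fun q => q <= d.+1)%N) /=.
have h1 : \sum_(q <- Q | (q <= d.+1)%N) (m q / q%:R) / (1 - m q / q%:R) <= (d.+1%:R) ^+ 2.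
  apply: (@le_trans _ _ (\sum_(q <- Q | (q <= d.+1)%N) (q%:R : R))).
    rewrite big_seq_cond [X in _ <= X]big_seq_cond; apply: ler_sum => q /andP[qQ _].
    apply: y_small; [exact: m0 | | exact: mq].
    by rewrite ler1n prime_gt0 // (allP pQ).
  apply: (@le_trans _ _ (\sum_(0 <= i < d.+2) (i%:R : R))).
    rewrite -big_filter; apply: sub_sum_le.
    - exact: filter_uniq.
    - by move=> q; rewrite mem_filter mem_index_iota ltnS => /andP[-> _].
    - exact: iota_uniq.
    - by move=> i _; rewrite ler0n.
  by rewrite -natr_sum -natrX ler_nat expnSr expn1 tri_sum.
have h2 : \sum_(q <- Q | ~~ (q <= d.+1)%N) (m q / q%:R) / (1 - m q / q%:R)
    <= (d.+1%:R) ^+ 2 / 2 * \sum_(q <- Q) (q%:R : R)^-1.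
  rewrite mulr_sumr [X in _ <= X](bigID (fun q => q <= d.+1)%N) /= ler_wpDl //.
    by apply: sumr_ge0 => i _; rewrite mulr_ge0 ?invr_ge0 ?ler0n // divr_ge0 ?sqr_ge0.

  rewrite big_seq_cond [X in _ <= X]big_seq_cond; apply: ler_sum => q /andP[qQ dq].
  rewrite -natr1.
  apply: y_big; [exact: m0 | by rewrite ler0n | | exact: md].
  have e2 : ((d + 2)%N%:R : R) = d%:R + 2 by rewrite natrD.
  by rewrite -ltnNge in dq; rewrite -e2 ler_nat addn2.
have hd : (0 : R) <= (d.+1%:R) ^+ 2 / 2 by rewrite divr_ge0 // sqr_ge0.
have := ler_wpM2l hd HB.
set D := (d.+1%:R : R) ^+ 2 in h1 h2 hd *.
lra.
Qed.

Local Open Scope ring_scope.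

Lemma fact_exp (R : realType) l : (0 < l)%N -> (l%:R : R) ^+ l <= expR l%:R * l`!%:R.
Proof.
case: l => // n _.
have h := @expR_ge1Dxn R n.+1%:R n (ler0n _ _).
have F0 : (0 : R) < n.+1`!%:R by rewrite ltr0n fact_gt0.
rewrite -ler_pdivrMr //.
have : 0 <= 1 :> R by [].
lra.
Qed.

Lemma final_ineq (R : realType) (X a : R) l : (0 < l)%N -> 0 <= X -> X <= a ->
  X ^+ l.+1 / l.+1`!%:R <= (expR 1 * a / l%:R) ^+ l * a.
Proof.
move=> l0 X0 Xa.
have a0 : 0 <= a by lra.
have F0 : (0 : R) < l`!%:R by rewrite ltr0n fact_gt0.
have P0 : (0 : R) < l%:R ^+ l by rewrite exprn_gt0 // ltr0n.
have hE := fact_exp R l0.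
set u := a ^+ l * a.
have u0 : 0 <= u by rewrite mulr_ge0 // exprn_ge0.
have h1 : X ^+ l.+1 / l.+1`!%:R <= u / l`!%:R.
  rewrite factS natrM; apply: ler_pM.
  - by rewrite exprn_ge0.
  - by rewrite invr_ge0 mulr_ge0 // ltW.
  - by rewrite /u -exprSr lerXn2r // nnegrE.
  - rewrite lef_pV2 ?posrE ?mulr_gt0 ?ltr0n ?fact_gt0 //.
    by rewrite -[X in X <= _]mul1r ler_wpM2r ?ler1n ?ltW.
apply: le_trans h1 _.
have -> : (expR 1 * a / l%:R) ^+ l * a = expR l%:R * u / l%:R ^+ l.
  rewrite /u -(mulr1 l%:R) expRM_natl mulr1 exprMn exprMn exprVn.
  ring.
rewrite ler_pdivlMr // mulrAC ler_pdivrMr // mulrAC [X in _ <= X]mulrC.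
have h := ler_wpM2l u0 hE. rewrite /u in h *.
have -> : a ^+ l * l%:R ^+ l * a = a ^+ l * a * l%:R ^+ l by ring.
apply: (le_trans h); rewrite le_eqVlt; apply/orP; left; apply/eqP; ring.
Qed.

Local Open Scope ring_scope.

Lemma Tsum_full (R : realType) (xs : seq R) l : (size xs <= l)%N ->
  Tsum xs l = \prod_(x <- xs) (1 - x).
Proof.
elim: xs l => [|x xs IH] l; first by rewrite big_nil.
case: l => [|l] /= hl; first by []. 
rewrite big_cons (IH l.+1 (ltnW hl)) (IH l hl); ring.
Qed.

Lemma W_ge (R : realType) (xs : seq R) : all (fun x => 0 <= x < 1) xs ->
  expR (- \sum_(x <- xs) x / (1 - x)) <= \prod_(x <- xs) (1 - x).
Proof.
elim: xs => [|x xs IH]; first by rewrite !big_nil oppr0 expR0.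
rewrite /= => /andP[/andP[x0 x1] hxs]; rewrite !big_cons opprD expRD.
apply: ler_pM; [by rewrite ltW ?expR_gt0 | by rewrite ltW ?expR_gt0 | | exact: IH].
have h := expR_ge1Dx (x / (1 - x)).
have p : 0 < 1 - x by lra.
rewrite expRN -[X in _ <= X]invrK lef_pV2 ?posrE ?expR_gt0 ?invr_gt0 //.
apply: le_trans h; rewrite le_eqVlt; apply/orP; left; apply/eqP.
by field; rewrite gt_eqF.
Qed.

Lemma alpha_ge0 (R : realType) k : (0 < k)%N -> 0 <= 2 + ln (ln (k.+1%:R : R)).
Proof.
move=> k0.
have l2 := ln2_ge R.
have lk : ln 2 <= ln (k.+1%:R : R) by rewrite ler_ln ?posrE ?ltr0n // ler_nat ltnS.
have lp : 0 < ln (k.+1%:R : R) by lra.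
have := ln_ge1B lp.
have : (ln (k.+1%:R : R))^-1 <= 8 / 5.
  rewrite -[8 / 5](invf_div (5 : R) 8) lef_pV2 ?posrE //; lra.
lra.
Qed.

Unset Implicit Arguments.

Theorem mainTheorem4 (R : realType) (Q : seq nat) (d ell : nat) (m : nat -> R) :
  Q != [::] -> uniq Q -> all prime Q ->
  (1 <= d)%N -> (0 < ell)%N -> odd ell ->
  (forall n : nat, (0 < n)%N -> 0 < m n) ->
  multiplicative_fn m ->
  (forall q, q \in Q -> m q <= q%:R - 1) ->
  (forall q, q \in Q -> m q <= d%:R) ->
  let alpha := (d.+1%:R) ^+ 2 * (2 + ln (ln ((size Q).+1%:R))) in
  \sum_(r <- divisors (\prod_(q <- Q) q)%N | (omega r <= ell)%N)
      (mobius r)%:~R * m r / r%:R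
  >= (\prod_(q <- Q) (1 - m q / q%:R))
     * (1 - (expR 1 * alpha / ell%:R) ^+ ell * alpha * expR alpha).
Proof.
move=> Qn uQ pQ d1 l0 lodd mpos mm mq1 mqd; lazy zeta.
set alpha := (d.+1%:R) ^+ 2 * (2 + ln (ln ((size Q).+1%:R))) : R.
have m1' := m1 mpos mm.
rewrite partA //.
have -> : \prod_(q <- Q) (1 - m q / q%:R) = \prod_(x <- [seq m q / q%:R | q <- Q]) (1 - x).
  by rewrite big_map.
set xs := [seq m q / q%:R | q <- Q].
have hx01 : all (fun x => 0 <= x < 1) xs.
  apply/allP => x /mapP[q qQ ->].
  have q0 : (0 : R) < q%:R by rewrite ltr0n prime_gt0 // (allP pQ).
  have := mpos q (prime_gt0 (allP pQ q qQ)); have := mq1 q qQ => h1 h2.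
  rewrite divr_ge0 ?ltW //= ltr_pdivrMr // mul1r; lra.
have hx01' : all (fun x => 0 <= x <= 1) xs.
  by apply: sub_all hx01 => x /andP[-> /ltW ->].
have /andP[W0 W1] := @prod_01 R xs hx01'.
set W := \prod_(x <- xs) (1 - x) in W0 W1 *.
have k0 : (0 < size Q)%N by case: Q Qn uQ pQ {xs hx01 hx01' W W0 W1 mq1 mqd alpha}.
have a0 : 0 <= alpha by rewrite /alpha mulr_ge0 ?sqr_ge0 ?alpha_ge0.
set C := (expR 1 * alpha / ell%:R) ^+ ell * alpha.
have C0 : 0 <= C by rewrite mulr_ge0 // exprn_ge0 // divr_ge0 ?ler0n // mulr_ge0 ?expR_ge0.
have E0 : 0 < expR alpha by apply: expR_gt0.
have [hk|hk] := leqP (size Q) ell.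
  rewrite Tsum_full ?size_map // -/W.
  have : 0 <= W * (C * expR alpha) by apply: mulr_ge0 => //; apply: mulr_ge0 => //; apply: ltW.
  lra.
have k2 : (2 <= size Q)%N by apply: leq_ltn_trans hk.
have B := @partB R xs ell hx01'.
set X := \sum_(x <- xs) x in B.
set Y := \sum_(x <- xs) x / (1 - x).
have X0 : 0 <= X.
  rewrite /X big_seq; apply: sumr_ge0 => x xin; by have /allP/(_ x xin)/andP[] := hx01.
have XY : X <= Y.
  rewrite /X /Y big_seq [X in _ <= X]big_seq; apply: ler_sum => x xin.
  have /allP/(_ x xin)/andP[x0 x1] := hx01.
  rewrite ler_pdivlMr ?subr_gt0 //; nra.
have Ya : Y <= alpha.
  rewrite /Y /xs big_map /alpha; apply: Y_bound => //.
  by move=> q qQ; apply: mpos; rewrite prime_gt0 // (allP pQ).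
have hW := W_ge hx01.
rewrite -/Y in hW.
have hf := final_ineq l0 X0 (le_trans XY Ya).
rewrite -/C in hf.
have WE : 1 <= W * expR alpha.
  apply: le_trans (ler_wpM2r (ltW E0) hW).
  by rewrite -expRD -[X in X <= _]expR0 ler_expR; lra.
have : C <= W * expR alpha * C by rewrite ler_peMl.
have : W - Tsum xs ell <= `|W - Tsum xs ell| by apply: ler_norm.
lra.
Qed.
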